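(* Assume Assumption A. Let $(\sigma_i)_{i\in\mathbb{N}}$ be i.i.d. copies of $\sigma_0$ and $i_x:=\min\{i:\sigma_i>x\}$. Then there exists $c>0$ such that for all sufficiently large $x$, \[ \mathbf{E}\big[\sigma_{i_x}^{-1}\big]<c\,x^{-1}g(x). \]
   Context: $\sigma_0$ is a strictly positive random variable under $\mathbf{P}$ and $L(u):=1/\mathbf{P}(\sigma_0>u)$ satisfies $\lim_{u\to\infty}L(uv)/L(u)=1$ for all $v>0$. Assumption A: $L$ is continuous, and there exist functions $g,k$ with $g(u)\to0$ as $u\to\infty$, $g$ eventually monotone decreasing, such that $\lim_{u\to\infty}\big(L(uv)/L(u)-1\big)/g(u)=k(v)$ for every $v>0$, where there exists $v$ with $k(v)\neq0$ and $k(uv)\ne k(u)$ for all $u>0$. *)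

(* Defs.v *)
From HB Require Import structures.
From mathcomp Require Import all_boot all_order all_algebra.
From mathcomp Require Import all_classical all_reals all_analysis.
Set Implicit Arguments. Unset Strict Implicit. Unset Printing Implicit Defensive.
Import Order.TTheory GRing.Theory Num.Theory.
Import numFieldNormedType.Exports.
Local Open Scope classical_set_scope.
Local Open Scope ring_scope.

Definition iid_seq d (T : measurableType d) (R : realType) (P : probability T R)
  (X : nat -> {RV P >-> R}) : Prop :=
  (forall (i : nat) (B : set R), measurable B ->
      P (X i @^-1` B) = P (X 0%N @^-1` B)) /\
  (forall (n : nat) (B : nat -> set R), (forall i, measurable (B i)) ->
      P (\bigcap_(i in [set k | (k < n)%N]) (X i @^-1` B i))
      = \prod_(i < n) P (X i @^-1` B i))%E.

Definition tailL d (T : measurableType d) (R : realType) (P : probability T R)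
  (X0 : T -> R) (u : R) : R :=
  (fine (P [set w | u < X0 w]))^-1.

(* i_x(w) := min { i : X_i(w) > x }  (set to 0 on the null event where no such i exists) *)
Definition first_exceed (T : Type) (R : realType) (X : nat -> T -> R) (x : R) (w : T) : nat :=
  match pselect (exists i : nat, x < X i w) with
  | left H => ex_minn H
  | right _ => 0%N
  end.

(* Main.v *)
Require Import Defs.
From HB Require Import structures.
From mathcomp Require Import all_boot all_order all_algebra.
From mathcomp Require Import all_classical all_reals all_analysis.
From mathcomp Require Import measurable_realfun ring lra.
Import Order.TTheory GRing.Theory Num.Theory.
Import numFieldNormedType.Exports.
Local Open Scope classical_set_scope.
Local Open Scope ring_scope.
Lemma le_int_ge0 {d} {T : measurableType d} {R : realType}
  (mu : {measure set T -> \bar R}) (f1 f2 : T -> \bar R) :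
  (forall x, (0 <= f1 x)%E) -> (forall x, (f1 x <= f2 x)%E) ->
  (\int[mu]_x f1 x <= \int[mu]_x f2 x)%E.
Proof.
move=> f10 f12; have f20 x : (0 <= f2 x)%E by exact: le_trans (f10 x) (f12 x).
rewrite !ge0_integralTE //=.
apply: ge_ereal_sup => _ [h /= hf1 <-]; apply: ereal_sup_ubound => /=.
by exists h => //= x; exact: le_trans (hf1 x) (f12 x).
Qed.

Lemma meas_le {R : realType} (x : R) : measurable [set r : R | r <= x].
Proof.
rewrite (_ : [set r | r <= x] = `]-oo, x]%classic); first exact: measurable_itv.
by apply/seteqP; split => r /=; rewrite in_itv.
Qed.

Lemma meas_oc {R : realType} (x y : R) : measurable [set r : R | x < r /\ r <= y].
Proof.
rewrite (_ : [set r | x < r /\ r <= y] = `]x, y]%classic); first exact: measurable_itv.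
apply/seteqP; split => r /=; rewrite in_itv /=.
  by move=> [-> ->].
by move=> /andP.
Qed.

Lemma meas_gt {R : realType} (x : R) : measurable [set r : R | x < r].
Proof.
rewrite (_ : [set r | x < r] = `]x, +oo[%classic); first exact: measurable_itv.
by apply/seteqP; split => r /=; rewrite in_itv /= andbT.
Qed.

Lemma geo_bound (R : realType) (r : R) (n : nat) : 0 <= r < 1 ->
  \sum_(i < n) r ^+ i <= (1 - r)^-1.
Proof.
move=> /andP[r0 r1].
have h : (1 - r) * \sum_(i < n) r ^+ i = 1 - r ^+ n.
  by rewrite -opprB mulNr -subrX1 opprB.
have q0 : 0 < 1 - r by rewrite subr_gt0.
rewrite -(ler_pM2l q0) h mulfV ?gt_eqF// lerBlDr lerDl; exact: exprn_ge0.
Qed.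

Lemma probpart (R : realType) d (T : measurableType d) (P : probability T R)
  (sigma : nat -> {RV P >-> R}) (x : R) :
  0 < x -> (forall w, 0 < sigma 0%N w) -> iid_seq sigma ->
  (0 < P [set w | (x < sigma 0%N w)%R])%E ->
  ('E_P[fun w => ((sigma (first_exceed (fun i => sigma i) x w) w)^-1)%R] <=
   \sum_(m <oo) (((x * 2^+m)^-1) *
      (1 - fine (P [set w | (x * 2^+m.+1 < sigma 0%N w)%R]) /
           fine (P [set w | (x < sigma 0%N w)%R])))%R%:E)%E.
Proof.
move=> x0 s0 [iidD iidI] Px.
set Q := fun u => fine (P [set w | u < sigma 0%N w]).
have mgt u : measurable [set w | u < sigma 0%N w].
  exact: (measurable_funPTI (sigma 0%N) (meas_gt u)).
have QE u : P [set w | u < sigma 0%N w] = (Q u)%:E.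
  by rewrite fineK // fin_num_measure.
have Qx0 : 0 < Q x by rewrite -lte_fin -QE.
have Q1 u : Q u <= 1 by rewrite -lee_fin -QE; exact: probability_le1.
have Q0 u : 0 <= Q u by rewrite -lee_fin -QE; exact: measure_ge0.
have Ple u : P (sigma 0%N @^-1` [set r | r <= u]) = (1 - Q u)%:E.
  rewrite (_ : _ @^-1` _ = ~` [set w | u < sigma 0%N w]).
    by rewrite probability_setC // QE EFinB.
  by apply/seteqP; split => w /=; rewrite leNgt => /negP.
have Poc u v : u <= v ->
    P (sigma 0%N @^-1` [set r | u < r /\ r <= v]) = (Q u - Q v)%:E.
  move=> uv.
  have mA : measurable (sigma 0%N @^-1` [set r | u < r /\ r <= v]).
    exact: (measurable_funPTI (sigma 0%N) (meas_oc u v)).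
  have := measureU P mA (mgt v).
  rewrite (_ : _ `|` _ = [set w | u < sigma 0%N w]); last first.
    apply/seteqP; split => w /=.
      by case=> [[]//|]; exact: le_lt_trans.
    by move=> uw; case: (leP (sigma 0%N w) v) => h; [left|right].
  rewrite (_ : _ `&` _ = set0); last first.
    by apply/seteqP; split => w //= [[_ h1] h2]; move: (le_lt_trans h1 h2); rewrite ltxx.
  move=> /(_ erefl) h.
  have : (Q u)%:E = (fine (P (sigma 0%N @^-1` [set r | u < r /\ r <= v])))%:E + (Q v)%:E.
    by rewrite -!QE fineK ?fin_num_measure.
  rewrite -[P _]fineK ?fin_num_measure // -EFinD => -[->]; by rewrite addrK.
have prodP n (B : nat -> set R) : (forall i, measurable (B i)) ->
    P (\bigcap_(i in [set k | (k < n)%N]) (sigma i @^-1` B i)) =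
    (\prod_(i < n) P (sigma 0%N @^-1` B i))%E.
  by move=> mB; rewrite iidI //; apply: eq_bigr => i _; rewrite iidD.
pose y m := x * 2 ^+ m.+1.
have xy m : x <= y m.
  by rewrite /y ler_peMr ?ltW // exprn_egt1 // ltr1n.
pose B m i j := if (j < i)%N then [set r : R | r <= x] else [set r | x < r /\ r <= y m].
have mB m i j : measurable (B m i j).
  by rewrite /B; case: ifP => _; [exact: meas_le| exact: meas_oc].
pose A m i := \bigcap_(j in [set k | (k < i.+1)%N]) (sigma j @^-1` B m i j).
have mA m i : measurable (A m i).
  by apply: bigcap_measurableType => j _; exact: measurable_funPTI.
have PA m i : P (A m i) = ((1 - Q x) ^+ i * (Q x - Q (y m)))%:E.
  rewrite /A prodP // big_ord_recr /= /B ltnn Poc //.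
  rewrite (eq_bigr (fun _ => (1 - Q x)%:E)); last first.
    by move=> j _; rewrite /= ltn_ord Ple.
  by rewrite prodEFin prodr_const card_ord -EFinM.
pose E m := \bigcup_i A m i.
have mE m : measurable (E m) by exact: bigcupT_measurable.
pose N := \bigcap_i (sigma i @^-1` [set r : R | r <= x]).
have mN : measurable N.
  by apply: bigcapT_measurable => i; exact: measurable_funPTI (meas_le x).
have PN : P N = 0%E.
  have le n : (P N <= ((1 - Q x) ^+ n)%:E)%E.
    apply: (@le_trans _ _ (P (\bigcap_(i in [set k | (k < n)%N]) (sigma i @^-1` [set r : R | r <= x])))).
      apply: le_measure; rewrite ?inE //.
        by apply: bigcap_measurableType => j _; exact: measurable_funPTI (meas_le x).
      by move=> w Nw i _; exact: Nw.
    rewrite prodP; last by move=> _; exact: meas_le.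
    rewrite (eq_bigr (fun _ => (1 - Q x)%:E)); last by move=> j _; rewrite Ple.
    by rewrite prodEFin prodr_const card_ord.
  rewrite -[P N]fineK ?fin_num_measure //; congr EFin; apply/eqP.
  rewrite eq_le fine_ge0 ?measure_ge0 // andbT leNgt; apply/negP => hpos.
  have r1 : `|1 - Q x| < 1.
    by rewrite ger0_norm ?subr_ge0 // ltrBlDr ltrDl.
  have /cvgr_dist_lt /(_ _ hpos) := cvg_expr r1.
  move=> [M _ HM]; have := HM M (leqnn M); rewrite /= sub0r normrN ger0_norm; last first.
    by rewrite exprn_ge0 // subr_ge0.
  by have := le M; rewrite -[P N]fineK ?fin_num_measure // lee_fin => /le_lt_trans h /h; rewrite ltxx.
have Qmono u v : u <= v -> Q v <= Q u.
  move=> uv; rewrite -lee_fin -!QE; apply: le_measure; rewrite ?inE //.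
  by move=> w /=; exact: le_lt_trans.
pose c m := (x * 2 ^+ m)^-1.
have c0 m : 0 < c m by rewrite invr_gt0 mulr_gt0 // exprn_gt0.
have ind0 (Z : set T) w : 0 <= \1_Z w :> R by rewrite indicE ler0n.
pose u m w : \bar R := (c m * \1_(E m) w + \1_N w)%:E.
have u0 m w : (0 <= u m w)%E by rewrite lee_fin addr_ge0 // mulr_ge0 // ltW.
have hpt w : 0 < (sigma (first_exceed (fun i => sigma i) x w) w)^-1 /\
   (((sigma (first_exceed (fun i => sigma i) x w) w)^-1)%:E <= \sum_(m <oo) u m w)%E.
  rewrite /first_exceed; case: pselect => [H|H].
    case: ex_minnP => i0 Hi0 Hmin.
    have s0' : 0 < sigma i0 w := lt_trans x0 Hi0.
    split; first by rewrite invr_gt0.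
    have ex : exists n, sigma i0 w <= x * 2 ^+ n.+1.
      have [n hn] : exists n : nat, sigma i0 w / x < n%:R.
        by exists (Num.Def.archi_bound (sigma i0 w / x)); apply: archi_boundP; rewrite divr_ge0 ?ltW.
      exists n; rewrite -(ler_pdivrMl _ _ x0) mulrC; apply: (le_trans (ltW hn)).
      have hn2 : (n <= 2 ^ n.+1)%N := ltnW (ltn_trans (ltnSn n) (ltn_expl n.+1 (isT : (1 < 2)%N))).
      by rewrite -natrX ler_nat.
    case: (ex_minnP ex) => M HM Mmin.
    have hxM : x * 2 ^+ M <= sigma i0 w.
      case: M HM Mmin => [|M'] HM Mmin; first by rewrite expr0 mulr1 ltW.
      rewrite leNgt; apply/negP => h; have := Mmin M' (ltW h); by rewrite ltnn.
    have EMw : E M w.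
      exists i0 => //= j /= ji; rewrite /B; case: ifP => [ji0|nji0].
        by rewrite /= leNgt; apply/negP => h; have := Hmin j h; rewrite leqNgt ji0.
      have -> : j = i0 by apply/eqP; rewrite eqn_leq -ltnS ji leqNgt nji0.
      by split.
    apply: (le_trans _ (@nneseries_lim_ge _ (u^~ w) xpredT 0 M.+1 (fun n _ _ => u0 n w))).
    rewrite big_nat_recr //= addeC; apply: (le_trans _ (leeDl _ _)); last by apply: sume_ge0 => n _; exact: u0.
    rewrite /u lee_fin indicE mem_set // mulr1.
    apply: (le_trans _ (_ : c M <= c M + \1_N w)); last by rewrite lerDl.
    by rewrite /c lef_pV2 ?posrE // mulr_gt0 // exprn_gt0.
  have s0w := s0 w.
  split; first by rewrite invr_gt0.
  have Nw : N w by move=> i _; rewrite /= leNgt; apply/negP => h; apply: H; exists i.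
  set K := Num.Def.archi_bound ((sigma 0%N w)^-1).
  apply: (le_trans _ (@nneseries_lim_ge _ (u^~ w) xpredT 0 K (fun n _ _ => u0 n w))).
  rewrite /u sumEFin lee_fin.
  apply: (le_trans (ltW (archi_boundP _))); first by rewrite invr_ge0 ltW.
  have -> : ((Num.Def.archi_bound (sigma 0%N w)^-1)%:R : R) = \sum_(0 <= i < K) 1.
    by rewrite sumr_const_nat subn0.
  apply: ler_sum => i _; by rewrite [\1_N w]indicE mem_set // lerDr mulr_ge0 // ltW.
have PE m : (P (E m) <= (1 - Q (y m) / Q x)%:E)%E.
  apply: le_trans (measure_sigma_subadditive P (mA m) (mE m) (@subset_refl _ _)) _.
  apply: lime_le; first by apply: is_cvg_nneseries => n _ _; exact: measure_ge0.
  apply: nearW => n; rewrite (eq_bigr _ (fun i _ => PA m i)) sumEFin lee_fin.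
  rewrite -mulr_suml big_mkord.
  have qp : 0 <= Q x - Q (y m) by rewrite subr_ge0 Qmono.
  have r01 : 0 <= 1 - Q x < 1 by rewrite subr_ge0 Q1 ltrBlDr ltrDl Qx0.
  apply: le_trans (ler_wpM2r qp (@geo_bound _ _ n r01)) _.
  by rewrite subKr mulrBr mulVf ?gt_eqF // mulrC.
have mu m : measurable_fun setT (u m).
  apply/measurable_EFinP; apply: measurable_funD; last exact: measurable_indic.
  by apply: measurable_funM; [exact: measurable_cst| exact: measurable_indic].
rewrite unlock.
apply: le_trans (le_int_ge0 P (fun w => ((sigma (first_exceed (fun i => sigma i) x w) w)^-1)%:E)
   (fun w => (\sum_(m <oo) u m w)%E) _ _) _.
- by move=> w; rewrite lee_fin; exact/ltW/(hpt w).1.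
- by move=> w; exact: (hpt w).2.
rewrite integral_nneseries //; try (by move=> n w _; exact: u0); try exact: mu.
apply: lee_nneseries => [m _ _|m _]; first by apply: integral_ge0 => w _; exact: u0.
rewrite /u; under eq_integral => w _ do rewrite EFinD.
rewrite ge0_integralD //; last 3 first.
- by move=> w _; rewrite lee_fin mulr_ge0 // ltW.
- apply/(measurable_EFinP _ (fun w => c m * \1_(E m) w)).
  by apply: measurable_funM; [exact: measurable_cst| exact: measurable_indic].
- by apply/(measurable_EFinP _ (fun w => \1_N w : R)); exact: measurable_indic.
rewrite integral_indic // setIT; set z := (X in (_ + X)%E); rewrite (_ : z = 0%E) ?adde0; last exact: PN.
under eq_integral => w _ do rewrite EFinM.
rewrite ge0_integralZl_EFin //; last 2 first.
- by apply/(measurable_EFinP _ (fun w => \1_(E m) w : R)); exact: measurable_indic.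
- exact: ltW.
rewrite integral_indic // setIT EFinM; apply: lee_wpmul2l; first by rewrite lee_fin ltW.
exact: PE.
Qed.

Lemma partA (R : realType) (Q g k : R -> R) (u0 : R) :
 (forall u, 0 < Q u) -> (forall u v, u <= v -> Q v <= Q u) ->
 g u @[u --> +oo] --> (0:R) -> (forall a b, u0 <= a -> a <= b -> g b <= g a) ->
 (forall v, 0 < v -> (((Q (u*v))^-1 / (Q u)^-1 - 1) / g u) @[u --> +oo] --> k v) ->
 (exists v, 0 < v /\ k v != 0) ->
 exists C, 0 < C /\ exists X, 0 < X /\ u0 <= X /\ forall x m, X <= x ->
   0 < g x /\ 1 - Q (x * 2^+m.+1) / Q x <= m.+1%:R * (C * g x).
Proof.
move=> Qp Qm g0 gm hk [v [v0 kv]].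
have ge0 b : u0 <= b -> 0 <= g b.
  move=> ub; rewrite leNgt; apply/negP => gb.
  have /cvgr_dist_lt /(_ (- g b)) H1 := g0; rewrite oppr_gt0 in H1.
  have [t [h1 h2]] := filter_ex (filterI (H1 gb) (nbhs_pinfty_ge (num_real b))).
  have := gm _ _ ub h2; move: h1; rewrite sub0r normrN ltr0_norm; first lra.
  exact: (le_lt_trans (gm _ _ ub h2)).
have gpos a : u0 <= a -> 0 < g a.
  move=> ua; rewrite lt_neqAle ge0 // andbT; apply/negP => /eqP ga0.
  have gz t : a <= t -> g t = 0.
    move=> hat; apply/eqP; rewrite eq_le ge0 ?(le_trans ua) // andbT.
    by rewrite ga0 gm.
  have /cvgr_dist_lt /(_ `|k v|) H1 := hk v v0; rewrite normr_gt0 in H1.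
  have [t [h1 h2]] := filter_ex (filterI (H1 kv) (nbhs_pinfty_ge (num_real a))).
  by move: h1; rewrite gz // invr0 mulr0 subr0 ltxx.
have /cvgr_dist_lt /(_ 1 ltr01) H2 := hk 2 (ltr0Sn _ _).
pose C := `|k 2| + 1.
have C0 : 0 < C by rewrite /C ltr_pwDr // normr_ge0.
have H3 : \forall t \near +oo, Q t - C * g t * Q t <= Q (t * 2).
  move: H2 (nbhs_pinfty_ge (num_real (Num.max u0 1))); apply: filterS2 => t h.
  rewrite ge_max => /andP[ut t1].
  have gt := gpos _ ut.
  move: h; rewrite ltr_distlC => /andP[_ h].
  have h' : ((Q (t * 2))^-1 / (Q t)^-1 - 1) / g t <= C.
    by apply: (le_trans (ltW h)); rewrite /C; have := ler_norm (k 2); lra.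
  rewrite ler_pdivrMr // invrK mulrC in h'.
  have q2 := Qp (t * 2); have q1 := Qp t.
  have qm : Q (t * 2) <= Q t by apply: Qm; rewrite ler_peMr ?ler1n //; lra.
  rewrite -(ler_pM2r q2) mulrBl mul1r divfK ?gt_eqF // in h'.
  have := ler_wpM2l (mulr_ge0 (ltW C0) (ltW gt)) qm; lra.
case: H3 => M [Mr HM].
exists C; split => //.
exists (Num.max (Num.max u0 (M + 1)) 1); split; first by rewrite lt_max ltr01 orbT.
split; first by rewrite !le_max lexx.
move=> x m; rewrite !ge_max => /andP[/andP[ux Mx] x1].
split; first exact: gpos.
have claim n : Q x * (1 - n%:R * (C * g x)) <= Q (x * 2 ^+ n).
  elim: n => [|n IH]; first by rewrite mul0r subr0 mulr1 expr0 mulr1.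
  have xy : x <= x * 2 ^+ n by rewrite ler_peMr ?exprn_ege1 ?ler1n //; lra.
  have : M < x * 2 ^+ n by lra.
  move/HM.
  rewrite exprSr [x * (_ * 2)]mulrA.
  have gyx := gm _ _ ux xy.
  have Qyx := Qm _ _ xy.
  have Qy0 := Qp (x * 2 ^+ n); have gy0 : 0 <= g (x * 2 ^+ n) by apply: ge0; lra.
  have ab : C * g (x * 2 ^+ n) * Q (x * 2 ^+ n) <= C * g x * Q x.
    apply: ler_pM => //; [|exact: ltW|].
      by apply: mulr_ge0 => //; exact: ltW.
    by apply: ler_wpM2l => //; exact: ltW.
  rewrite -[n.+1%:R]natr1; lra.
have h := claim m.+1; rewrite mulrC -ler_pdivlMr // in h.
lra.
Qed.

Lemma sumhalf (R : realType) n :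
  \sum_(m < n) (m.+1%:R * (2^-1)^+m) + 2 * n.+2%:R * (2^-1)^+n = 4 :> R.
Proof.
elim: n => [|n IH]; first by rewrite big_ord0 add0r expr0 mulr1; lra.
rewrite big_ord_recr /= -IH exprSr -!natr1.
by field.
Qed.

Theorem lemma3p3 (R : realType) (d : measure_display) (T : measurableType d)
  (P : probability T R) (sigma : nat -> {RV P >-> R}) (g k : R -> R) :
  (* sigma_0 strictly positive *)
  (forall w, 0 < sigma 0%N w) ->
  (* L is well defined: P(sigma_0 > u) > 0 for all u *)
  (forall u : R, (0 < P [set w | (u < sigma 0%N w)%R])%E) ->
  (* L slowly varying *)
  (forall v : R, 0 < v ->
     (tailL P (sigma 0%N) (u * v) / tailL P (sigma 0%N) u) @[u --> +oo] --> (1:R)) ->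
  (* Assumption A *)
  {in `]0, +oo[, continuous (tailL P (sigma 0%N))} ->
  (g u) @[u --> +oo] --> (0:R) ->
  (exists u0 : R, forall a b : R, u0 <= a -> a <= b -> g b <= g a) ->
  (forall v : R, 0 < v ->
     ((tailL P (sigma 0%N) (u * v) / tailL P (sigma 0%N) u - 1) / g u)
       @[u --> +oo] --> k v) ->
  (exists v : R, 0 < v /\ k v != 0 /\ forall u : R, 0 < u -> k (u * v) != k u) ->
  (* i.i.d. copies *)
  iid_seq sigma ->
  exists c : R, 0 < c /\
    \forall x \near +oo,
      ('E_P[fun w => ((sigma (first_exceed (fun i => sigma i) x w) w)^-1)%R]
         < (c * x^-1 * g x)%R%:E)%E.
Proof.
move=> s0 Ppos _ _ g0 [u0 gm] hk [v [v0 [kv _]]] iid.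
pose Q := fun u => fine (P [set w | (u < sigma 0%N w)%R]).
have mgt u : measurable [set w | u < sigma 0%N w].
  exact: (measurable_funPTI (sigma 0%N) (meas_gt u)).
have QE u : P [set w | u < sigma 0%N w] = (Q u)%:E.
  by rewrite fineK // fin_num_measure.
have Qp u : 0 < Q u by rewrite -lte_fin -QE.
have Qm u w : u <= w -> Q w <= Q u.
  move=> uw; rewrite -lee_fin -!QE; apply: le_measure; rewrite ?inE //.
  by move=> z /=; exact: le_lt_trans.
have [C [C0 [X [X0 [uX HX]]]]] := @partA R Q g k u0 Qp Qm g0 gm hk (ex_intro _ v (conj v0 kv)).
exists (4 * C + 1); split; first by rewrite addr_gt0 // mulr_gt0.
exists X; split; first exact: num_real.
move=> x /= Xx.
have x0 : 0 < x by lra.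
have Xx' : X <= x by lra.
have gx0 := (HX x 0%N Xx').1.
apply: le_lt_trans (@probpart R d T P sigma x x0 s0 iid (Ppos x)) _.
apply: (@le_lt_trans _ _ ((4 * C * g x / x)%:E)).
  have t0 m : (0 <= ((x * 2^+m)^-1 *
      (1 - fine (P [set w | (x * 2^+m.+1 < sigma 0%N w)%R]) /
           fine (P [set w | (x < sigma 0%N w)%R])))%:E)%E.
    rewrite lee_fin; apply: mulr_ge0; first by rewrite invr_ge0 mulr_ge0 ?exprn_ge0 ?ltW.
    rewrite subr_ge0 ler_pdivrMr ?mul1r; last exact: Qp.
    by apply: Qm; rewrite ler_peMr ?ltW // exprn_egt1 // ltr1n.
  apply: (@le_trans _ _ (\sum_(m <oo) ((x * 2^+m)^-1 * (m.+1%:R * (C * g x)))%:E)%E).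
    apply: lee_nneseries; first by move=> m _ _; exact: t0.
    move=> m _; rewrite lee_fin; apply: ler_wpM2l.
      by rewrite invr_ge0 mulr_ge0 ?exprn_ge0 ?ltW.
    exact: (HX x m Xx').2.
  apply: lime_le.
    apply: is_cvg_nneseries => m _ _; rewrite lee_fin mulr_ge0 ?invr_ge0 ?mulr_ge0 ?exprn_ge0 ?ltW //.
  apply: nearW => n; rewrite sumEFin lee_fin big_mkord.
  rewrite (eq_bigr (fun m : 'I_n => (C * g x / x) * (m.+1%:R * (2^-1)^+m))); last first.
    move=> m _; rewrite invfM exprVn; field.
    by apply/andP; split; rewrite ?gt_eqF ?exprn_gt0.
  rewrite -mulr_sumr.
  have := sumhalf R n.
  have h2 : 0 <= 2 * n.+2%:R * (2^-1 : R) ^+ n by rewrite mulr_ge0 ?exprn_ge0 ?invr_ge0.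
  move=> hs.
  have hS : \sum_(m < n) (m.+1%:R * (2^-1)^+m) <= 4 :> R by lra.
  have cg : 0 <= C * g x / x by rewrite divr_ge0 ?mulr_ge0 ?ltW.
  apply: le_trans (ler_wpM2l cg hS) _.
  have -> : C * g x / x * 4 = 4 * C * g x / x by ring.
  by [].
have H : 4 * C * g x / x < (4 * C + 1) * x^-1 * g x.
  rewrite -subr_gt0.
  have -> : (4 * C + 1) * x^-1 * g x - 4 * C * g x / x = g x / x by ring.
  by rewrite divr_gt0.
exact: H.
Qed.
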